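(* For any symmetric quiver $Q=(I,E)$ and $d\in\mathbb{N}^I$ there exists $\delta\in M(d)^{W_d}_\mathbb{R}$ such that $S^d_\delta=\{d\}$.
   Context: $Q$ symmetric: for all $i,j\in I$, the number of edges $i\to j$ equals that of $j\to i$. $R(d)=\bigoplus_{(i\to j)\in E}\mathrm{Hom}(V^i,V^j)$ ($\dim V^i=d^i$), $G(d)=\prod GL(V^i)$ with Lie algebra $\mathfrak{g}(d)$, diagonal torus $T(d)$ with weights $\beta^i_a$, $M(d)_\mathbb{R}$ its real weight space, $W_d=\prod\mathfrak{S}_{d^i}$. For a cocharacter $\lambda$: $n_\lambda=\langle\lambda,\det(R(d)^\vee)^{\lambda>0}\rangle-\langle\lambda,\det(\mathfrak{g}(d)^\vee)^{\lambda>0}\rangle$. A partition of $d$ is a collection of nonzero $d_1,\dots,d_k\in\mathbb{N}^I$ with sum $d$; $\lambda$ has associated partition $(d_j)$ if the $j$-th distinct value of $\langle\lambda,\beta^i_a\rangle$ occurs $d^i_j$ times for each $i$. $S^d_\delta$ is the set of partitions such that $n_\lambda/2+\langle\lambda,\delta\rangle\in\mathbb{Z}$ for all $\lambda$ with that associated partition; $\{d\}$ is the set consisting of the one-term partition. *)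

(* Defs.v *)
From HB Require Import structures.
From mathcomp Require Import all_boot all_order all_algebra.
From mathcomp Require Import fingroup perm.
From mathcomp Require Import reals.
Set Implicit Arguments. Unset Strict Implicit. Unset Printing Implicit Defensive.
Import Order.TTheory GRing.Theory Num.Theory.
Local Open Scope ring_scope.

Definition symmetric_quiver (I E : finType) (src tgt : E -> I) : Prop :=
  forall i j : I,
    #|[pred e : E | (src e == i) && (tgt e == j)]| =
    #|[pred e : E | (src e == j) && (tgt e == i)]|.

(* Index set of the weights beta^i_a of T(d): pairs (i, a) with a < d^i. *)
Definition wt (I : finType) (d : {ffun I -> nat}) : finType :=
  {i : I & 'I_(d i)}.

Definition wk (I : finType) (d : {ffun I -> nat}) (i : I) (a : 'I_(d i)) : wt d :=
  @Tagged I i (fun j => 'I_(d j)) a.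

Definition posz (z : int) : int := if 0 < z then z else 0.

(* A cocharacter lambda of T(d) is l : wt d -> int, <lambda, beta^i_a> = l (i,a).
   <lambda, det(R(d)^vee)^{lambda>0}>: weights of R(d)^vee on the summand
   Hom(V^i,V^j) of the edge e : i -> j are beta^i_a - beta^j_b. *)
Definition nR (I E : finType) (src tgt : E -> I) (d : {ffun I -> nat})
    (l : wt d -> int) : int :=
  \sum_(e : E) \sum_(a : 'I_(d (src e))) \sum_(b : 'I_(d (tgt e)))
     posz (l (wk a) - l (wk b)).

(* <lambda, det(g(d)^vee)^{lambda>0}>: weights beta^i_a - beta^i_b. *)
Definition ng (I : finType) (d : {ffun I -> nat}) (l : wt d -> int) : int :=
  \sum_(i : I) \sum_(a : 'I_(d i)) \sum_(b : 'I_(d i))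
     posz (l (wk a) - l (wk b)).

Definition n_lambda (I E : finType) (src tgt : E -> I) (d : {ffun I -> nat})
    (l : wt d -> int) : int :=
  nR src tgt l - ng l.

Definition pairing (R : realType) (I : finType) (d : {ffun I -> nat})
    (l : wt d -> int) (delta : wt d -> R) : R :=
  \sum_(k : wt d) (l k)%:~R * delta k.

Definition W_invariant (R : realType) (I : finType) (d : {ffun I -> nat})
    (delta : wt d -> R) : Prop :=
  forall (s : forall i : I, {perm 'I_(d i)}) (i : I) (a : 'I_(d i)),
    delta (wk (s i a)) = delta (wk a).

Definition is_partition (I : finType) (d : {ffun I -> nat})
    (p : seq {ffun I -> nat}) : Prop :=
  (forall x, x \in p -> exists i, x i <> 0%N) /\
  (forall i, (\sum_(x <- p) x i)%N = d i).

(* the partition associated to lambda: the distinct values of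
   <lambda, beta^i_a>, listed in decreasing order; the j-th one occurs
   d_j^i times among the beta^i_a. *)
Definition assoc_partition (I : finType) (d : {ffun I -> nat})
    (l : wt d -> int) : seq {ffun I -> nat} :=
  [seq [ffun i => #|[pred a : 'I_(d i) | l (wk a) == v]|]
     | v <- sort (fun x y : int => y <= x) (undup [seq l k | k <- enum (wt d)])].

Definition in_S (R : realType) (I E : finType) (src tgt : E -> I)
    (d : {ffun I -> nat}) (delta : wt d -> R) (p : seq {ffun I -> nat}) : Prop :=
  forall l : wt d -> int, assoc_partition l = p ->
    ((n_lambda src tgt l)%:~R / 2 + pairing l delta) \is a Num.int.

(* Main.v *)
Require Import Defs.
From HB Require Import structures.
From mathcomp Require Import all_boot all_order all_algebra.
From mathcomp Require Import fingroup perm reals.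
From mathcomp Require Import zify ring lra.
Set Implicit Arguments. Unset Strict Implicit. Unset Printing Implicit Defensive.
Import Order.TTheory GRing.Theory Num.Theory.
Local Open Scope ring_scope.

Definition Ecnt (I E : finType) (src tgt : E -> I) (i j : I) : nat :=
  #|[pred e : E | (src e == i) && (tgt e == j)]|.

Lemma edge_sum (I E : finType) (src tgt : E -> I) (F : I -> I -> int) :
  \sum_(e : E) F (src e) (tgt e) =
  \sum_(i : I) \sum_(j : I) (Ecnt src tgt i j)%:R * F i j.
Proof.
rewrite (eq_bigr (fun e => \sum_(i : I) \sum_(j : I)
   (if (src e == i) && (tgt e == j) then F i j else 0))); last first.
  move=> e _; rewrite (bigD1 (src e)) //= [X in _ + X]big1 ?addr0; last first.
    by move=> i Hi; apply: big1 => j _; rewrite eq_sym (negPf Hi).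
  rewrite (bigD1 (tgt e)) //= [X in _ + X]big1 ?addr0 ?eqxx //.
  by move=> j Hj; rewrite eq_sym (negPf Hj) andbF.
rewrite exchange_big; apply: eq_bigr => i _; rewrite exchange_big.
apply: eq_bigr => j _; rewrite -big_mkcond /= sumr_const.
by rewrite mulr_natl.
Qed.

Lemma sym_sum (I : finType) (a : I -> I -> int) (ha : forall i j, a i j = a j i) :
  \sum_(i : I) \sum_(j : I) a i j = \sum_(i : I) a i i +
   2 * \sum_(i : I) \sum_(j : I) (if (enum_rank i < enum_rank j)%N then a i j else 0).
Proof.
have H i j : a i j = (if (enum_rank i < enum_rank j)%N then a i j else 0)
   + (if (enum_rank j < enum_rank i)%N then a i j else 0)
   + (if j == i then a i j else 0).
  case: ltngtP => h; rewrite ?addr0 ?add0r.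
  - by case: eqP => [e|_]; [move: h; rewrite e ltnn | rewrite addr0].
  - by case: eqP => [e|_]; [move: h; rewrite e ltnn | rewrite addr0].
  - have -> : j = i by apply: enum_rank_inj; apply: val_inj => /=.
    by rewrite eqxx.
rewrite (eq_bigr (fun i => \sum_j ((if (enum_rank i < enum_rank j)%N then a i j else 0)
   + (if (enum_rank j < enum_rank i)%N then a i j else 0)
   + (if j == i then a i j else 0)))); last by move=> i _; apply: eq_bigr => j _; exact: H.
rewrite (eq_bigr (fun i => \sum_j ((if (enum_rank i < enum_rank j)%N then a i j else 0)
   + (if (enum_rank j < enum_rank i)%N then a i j else 0)) + a i i)); last first.
  move=> i _; rewrite big_split /=; congr (_ + _).
  by rewrite -big_mkcond big_pred1_eq.
rewrite big_split /= [X in X + _ = _](eq_bigr (fun i => \sum_j (if (enum_rank i < enum_rank j)%N then a i j else 0) + \sum_j (if (enum_rank j < enum_rank i)%N then a i j else 0))); last by move=> i _; rewrite big_split.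
rewrite big_split /=.
have -> : \sum_i \sum_j (if (enum_rank j < enum_rank i)%N then a i j else 0) =
          \sum_i \sum_j (if (enum_rank i < enum_rank j)%N then a i j else 0).
  rewrite exchange_big; apply: eq_bigr => i _; apply: eq_bigr => j _.
  by rewrite ha.
by ring.
Qed.

Definition hh (y : int) : int :=
  match y with Posz n => ((n * n.+1)./2)%N%:Z | Negz n => ((n * n.+1)./2)%N%:Z end.

Lemma hhP (y : int) : y * (y + 1) = 2 * hh y.
Proof.
have key n : (n * n.+1 = ((n * n.+1)./2).*2)%N.
  rewrite -[LHS]odd_double_half oddM /=; by case: (odd n).
case: y => n /=.
  transitivity ((n * n.+1)%N%:Z); first by rewrite PoszM -addn1 PoszD.
  by rewrite {1}key -mul2n PoszM.
rewrite NegzE.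
have -> : - (n.+1)%:Z * (- (n.+1)%:Z + 1) = (n * n.+1)%N%:Z.
  rewrite PoszM -addn1 PoszD; ring.
by rewrite {1}key -mul2n PoszM.
Qed.

Definition kappa (I E : finType) (src tgt : E -> I) (d : I -> int) (i : I) : int :=
  \sum_(e : E) (if src e == i then d (tgt e) else 0) - (Ecnt src tgt i i)%:R + d i + 1.

Lemma parity (I E : finType) (src tgt : E -> I)
  (hsym : symmetric_quiver src tgt) (d x : I -> int) :
  \sum_(e : E) x (src e) * (d (tgt e) - x (tgt e)) - \sum_(i : I) x i * (d i - x i)
  + \sum_(i : I) x i * kappa src tgt d i =
  2 * (\sum_(e : E) x (src e) * d (tgt e)
       - \sum_(i : I) \sum_(j : I)
           (if (enum_rank i < enum_rank j)%N then (Ecnt src tgt i j)%:R * x i * x j else 0)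
       - \sum_(i : I) (Ecnt src tgt i i)%:R * hh (x i) + \sum_(i : I) hh (x i)).
Proof.
set A := \sum_(e : E) x (src e) * d (tgt e).
set T := \sum_(i : I) \sum_(j : I) _.
have e1 : \sum_(e : E) x (src e) * (d (tgt e) - x (tgt e)) =
          A - \sum_(e : E) x (src e) * x (tgt e).
  by rewrite -sumrB; apply: eq_bigr => e _; rewrite mulrBr.
have e2 : \sum_(e : E) x (src e) * x (tgt e) =
   \sum_(i : I) (Ecnt src tgt i i)%:R * x i * x i + 2 * T.
  rewrite (edge_sum src tgt (fun i j => x i * x j)).
  rewrite (sym_sum (a := fun i j => (Ecnt src tgt i j)%:R * (x i * x j))).
    by congr (_ + _); [apply: eq_bigr => i _; rewrite mulrA
      | congr (_ * _); apply: eq_bigr => i _; apply: eq_bigr => j _; rewrite mulrA].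
  by move=> i j; rewrite /Ecnt (hsym i j) (mulrC (x i)).
have e3 : \sum_(i : I) x i * (d i - x i) =
   \sum_(i : I) x i * d i - \sum_(i : I) x i * x i.
  by rewrite -sumrB; apply: eq_bigr => i _; rewrite mulrBr.
have e4 : \sum_(i : I) x i * kappa src tgt d i =
   A - \sum_(i : I) (Ecnt src tgt i i)%:R * x i + \sum_(i : I) x i * d i
   + \sum_(i : I) x i.
  have -> : A = \sum_(i : I) x i * \sum_(e : E) (if src e == i then d (tgt e) else 0).
    rewrite /A (eq_bigr (fun e => \sum_(i : I) x i * (if src e == i then d (tgt e) else 0))).
      by rewrite exchange_big; apply: eq_bigr => i _; rewrite mulr_sumr.
    move=> e _; rewrite (bigD1 (src e)) //= eqxx [X in _ + X]big1 ?addr0 //.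
    by move=> i Hi; rewrite eq_sym (negPf Hi) mulr0.
  rewrite -!sumrB -!big_split /=; apply: eq_bigr => i _.
  rewrite /kappa; ring.
have e5 : \sum_(i : I) (Ecnt src tgt i i)%:R * x i * x i +
          \sum_(i : I) (Ecnt src tgt i i)%:R * x i =
          2 * \sum_(i : I) (Ecnt src tgt i i)%:R * hh (x i).
  rewrite -big_split mulr_sumr; apply: eq_bigr => i _ /=.
  by rewrite mulrCA -hhP; ring.
have e6 : \sum_(i : I) x i * x i + \sum_(i : I) x i = 2 * \sum_(i : I) hh (x i).
  rewrite -big_split mulr_sumr; apply: eq_bigr => i _ /=.
  by rewrite -hhP; ring.
rewrite e1 e2 e3 e4.
move: e5 e6.
set S5 := \sum_(i : I) (Ecnt src tgt i i)%:R * x i * x i.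
set S4 := \sum_(i : I) (Ecnt src tgt i i)%:R * x i.
set S2 := \sum_(i : I) x i * x i.
set S3 := \sum_(i : I) x i.
set S1 := \sum_(i : I) x i * d i.
set H1 := \sum_(i : I) (Ecnt src tgt i i)%:R * hh (x i).
set H2 := \sum_(i : I) hh (x i).
move=> e5 e6.
have -> : 2 * (A - T - H1 + H2) = 2 * A - 2 * T - 2 * H1 + 2 * H2 by ring.
rewrite -e5 -e6; ring.
Qed.
Lemma card_nth (T : eqType) (x0 : T) (s : seq T) n (P : pred T) :
  size s = n -> #|[pred a : 'I_n | P (nth x0 s a)]| = count P s.
Proof.
move=> <-; rewrite cardE /enum_mem size_filter -enumT.
have -> : count [pred a : 'I_(size s) | P (nth x0 s a)] (enum 'I_(size s))
   = count P (map (nth x0 s) (map val (enum 'I_(size s)))).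
  by rewrite !count_map.
by rewrite val_enum_ord -/(mkseq _ _) mkseq_nth.
Qed.

Definition f0 (I : finType) : {ffun I -> nat} := [ffun _ => 0%N].

Definition blkseq (I : finType) (p : seq {ffun I -> nat}) (i : I) : seq nat :=
  flatten [seq nseq (nth (f0 I) p j i) j | j <- iota 0 (size p)].

Lemma count_blk (I : finType) (p : seq {ffun I -> nat}) i j :
  (j < size p)%N -> count (pred1 j) (blkseq p i) = nth (f0 I) p j i.
Proof.
move=> hj; rewrite /blkseq count_flatten sumnE big_map big_map.
rewrite (eq_bigr (fun t => ((t == j) * nth (f0 I) p t i)%N)); last first.
  by move=> t _; rewrite count_nseq /= eq_sym.
have -> : iota 0 (size p) = index_iota 0 (size p) by rewrite /index_iota subn0.
rewrite big_mkord.
rewrite (bigD1 (Ordinal hj)) //= eqxx mul1n big1 ?addn0 //.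
by move=> t /negPf; rewrite -val_eqE /= => ->.
Qed.

Lemma size_blk (I : finType) (p : seq {ffun I -> nat}) i :
  size (blkseq p i) = (\sum_(x <- p) x i)%N.
Proof.
rewrite /blkseq size_flatten /shape -map_comp sumnE big_map.
rewrite (big_nth (f0 I)) /index_iota subn0; apply: eq_bigr => j _.
by rewrite /= size_nseq.
Qed.

Lemma mem_blk (I : finType) (p : seq {ffun I -> nat}) i t :
  t \in blkseq p i -> (t < size p)%N.
Proof.
case/flattenP => s /mapP [j]; rewrite mem_iota add0n => /andP [_ hj] -> /nseqP [-> _].
exact: hj.
Qed.

Definition lv (I : finType) (d : {ffun I -> nat}) (p : seq {ffun I -> nat})
  (v : nat -> int) : wt d -> int :=
  fun k => v (nth 0%N (blkseq p (tag k)) (tagged k)).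

Lemma assoc_lv (I : finType) (d : {ffun I -> nat}) (p : seq {ffun I -> nat})
  (hp : is_partition d p) (v : nat -> int)
  (hv : forall j j', (j < j')%N -> v j' < v j) :
  assoc_partition (lv (d:=d) p v) = p.
Proof.
have vinj : injective v.
  move=> j j' e; case: (ltngtP j j') => // h; have := hv _ _ h; by rewrite e ltxx.
have hsz i : size (blkseq p i) = d i by rewrite size_blk hp.2.
have memV w : (w \in [seq lv (d:=d) p v k | k <- enum (wt d)]) =
              (w \in [seq v j | j <- iota 0 (size p)]).
  apply/idP/idP.
    case/mapP => -[i a] _ ->; rewrite /lv /=.
    apply: map_f; rewrite mem_iota add0n /=; apply: (@mem_blk _ _ i).
    by apply: mem_nth; rewrite hsz.
  case/mapP => j; rewrite mem_iota add0n /= => hj ->.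
  have [i hi] := hp.1 _ (mem_nth (f0 I) hj).
  have jin : j \in blkseq p i.
    rewrite -has_pred1 has_count count_blk //; case: (nth (f0 I) p j i) hi => //.
  have ha : (index j (blkseq p i) < d i)%N by rewrite -hsz index_mem.
  apply/mapP; exists (wk (Ordinal ha)); first by rewrite mem_enum.
  by rewrite /lv /= nth_index.
have geT : total (fun x y : int => y <= x) by move=> x y; exact: le_total.
have geA : antisymmetric (fun x y : int => y <= x).
  by move=> x y /andP [h1 h2]; apply: le_anti; rewrite h1 h2.
have geTr : transitive (fun x y : int => y <= x).
  by move=> x y z h1 h2; exact: le_trans h2 h1.
rewrite /assoc_partition.
have -> : sort (fun x y : int => y <= x) (undup [seq lv (d:=d) p v k | k <- enum (wt d)])
          = [seq v j | j <- iota 0 (size p)].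
  apply: (sorted_eq geTr geA).
  - exact: sort_sorted.
  - apply: (homo_sorted (e := ltn)); last exact: iota_ltn_sorted.
    by move=> x y h; apply: ltW; apply: hv.
  - apply: uniq_perm.
    + by rewrite sort_uniq undup_uniq.
    + by rewrite map_inj_uniq // iota_uniq.
    + by move=> w; rewrite mem_sort mem_undup memV.
rewrite -map_comp -[RHS](mkseq_nth (f0 I) p) /mkseq; apply/eq_in_map => j.
rewrite mem_iota add0n /= => hj; apply/ffunP => i; rewrite ffunE.
have -> : #|[pred a : 'I_(d i) | lv (d:=d) p v (wk a) == v j]| =
          #|[pred a : 'I_(d i) | pred1 j (nth 0%N (blkseq p i) a)]|.
  by apply: eq_card => a; rewrite !inE /lv /= (inj_eq vinj).
by rewrite card_nth ?hsz // count_blk.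
Qed.

Definition v0 (j : nat) : int := - (j%:Z).
Definition v1 (j : nat) : int := if j == 0%N then 1 else - (j%:Z).

Lemma v0_dec j j' : (j < j')%N -> v0 j' < v0 j.
Proof. rewrite /v0 => h; rewrite ltrN2 ltz_nat //. Qed.

Lemma v1_dec j j' : (j < j')%N -> v1 j' < v1 j.
Proof.
rewrite /v1; case: j' => // j'; case: j => [|j] h /=; lia.
Qed.

Lemma posz_diff j j' :
  posz (v1 j - v1 j') - posz (v0 j - v0 j') = ((j == 0%N) && (j' != 0%N))%:R.
Proof.
rewrite /v0 /v1 /posz; case: j => [|j]; case: j' => [|j'] /=;
  repeat case: ifP; lia.
Qed.

Lemma v_diff j : v1 j - v0 j = (j == 0%N)%:R.
Proof. by rewrite /v0 /v1; case: j => [|j] /=; lia. Qed.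

Lemma sum_ind (n : nat) (P : pred 'I_n) : \sum_(a : 'I_n) ((P a)%:R : int) = #|P|%:R.
Proof.
rewrite -sumr_const [RHS]big_mkcond /=; apply: eq_bigr => a _; by rewrite unfold_in; case: (P a).
Qed.

Lemma sum_prod n m (P : pred 'I_n) (Q : pred 'I_m) :
  \sum_(a : 'I_n) \sum_(b : 'I_m) (((P a) && (Q b))%:R : int) = #|P|%:R * #|Q|%:R.
Proof.
rewrite -!sum_ind big_distrlr /=; apply: eq_bigr => a _; apply: eq_bigr => b _.
by case: (P a); case: (Q b).
Qed.

Lemma cnt0 (I : finType) (d : {ffun I -> nat}) (p : seq {ffun I -> nat})
  (hp : is_partition d p) (hp0 : (0 < size p)%N) i :
  #|[pred a : 'I_(d i) | nth 0%N (blkseq p i) a == 0%N]| = nth (f0 I) p 0 i.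
Proof.
have hsz : size (blkseq p i) = d i by rewrite size_blk hp.2.
by rewrite (card_nth 0%N (pred1 0%N) hsz) count_blk.
Qed.

Lemma cnt1 (I : finType) (d : {ffun I -> nat}) (p : seq {ffun I -> nat})
  (hp : is_partition d p) (hp0 : (0 < size p)%N) i :
  (#|[pred a : 'I_(d i) | nth 0%N (blkseq p i) a != 0%N]|%:R : int)
   = (d i)%:R - (nth (f0 I) p 0 i)%:R.
Proof.
have hsz : size (blkseq p i) = d i by rewrite size_blk hp.2.
rewrite (card_nth 0%N (predC (pred1 0%N)) hsz).
have := count_predC (pred1 0%N) (blkseq p i); rewrite hsz count_blk // => <-.
by rewrite natrD addrC addKr.
Qed.

Lemma block_pair (I : finType) (d : {ffun I -> nat}) (p : seq {ffun I -> nat})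
  (hp : is_partition d p) (hp0 : (0 < size p)%N) i i' :
  \sum_(a : 'I_(d i)) \sum_(b : 'I_(d i'))
     (posz (lv (d:=d) p v1 (wk a) - lv (d:=d) p v1 (wk b))
      - posz (lv (d:=d) p v0 (wk a) - lv (d:=d) p v0 (wk b)))
  = (nth (f0 I) p 0 i)%:R * ((d i')%:R - (nth (f0 I) p 0 i')%:R).
Proof.
rewrite (eq_bigr (fun a : 'I_(d i) => \sum_(b : 'I_(d i'))
   (((nth 0%N (blkseq p i) a == 0%N) && (nth 0%N (blkseq p i') b != 0%N))%:R : int))).
  by rewrite sum_prod cnt0 // cnt1.
by move=> a _; apply: eq_bigr => b _; rewrite /lv /= posz_diff.
Qed.

Lemma nR_diff (I E : finType) (src tgt : E -> I) (d : {ffun I -> nat})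
  (p : seq {ffun I -> nat}) (hp : is_partition d p) (hp0 : (0 < size p)%N) :
  nR src tgt (lv (d:=d) p v1) - nR src tgt (lv (d:=d) p v0) =
  \sum_(e : E) (nth (f0 I) p 0 (src e))%:R *
     ((d (tgt e))%:R - (nth (f0 I) p 0 (tgt e))%:R).
Proof.
rewrite /nR -sumrB; apply: eq_bigr => e _; rewrite -block_pair // -sumrB.
by apply: eq_bigr => a _; rewrite -sumrB.
Qed.

Lemma ng_diff (I : finType) (d : {ffun I -> nat})
  (p : seq {ffun I -> nat}) (hp : is_partition d p) (hp0 : (0 < size p)%N) :
  ng (lv (d:=d) p v1) - ng (lv (d:=d) p v0) =
  \sum_(i : I) (nth (f0 I) p 0 i)%:R * ((d i)%:R - (nth (f0 I) p 0 i)%:R).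
Proof.
rewrite /ng -sumrB; apply: eq_bigr => i _; rewrite -block_pair // -sumrB.
by apply: eq_bigr => a _; rewrite -sumrB.
Qed.

Lemma sum_wt (R : realType) (I : finType) (d : {ffun I -> nat}) (F : wt d -> R) :
  \sum_(k : wt d) F k = \sum_(i : I) \sum_(a : 'I_(d i)) F (wk a).
Proof.
rewrite (sig_big_dep (J := fun i => 'I_(d i)) xpredT (fun i => xpredT)
          (fun i a => F (wk a))) /=.
by apply: eq_bigr => -[i a].
Qed.

Lemma pairing_diff (R : realType) (I : finType) (d : {ffun I -> nat})
  (p : seq {ffun I -> nat}) (hp : is_partition d p) (hp0 : (0 < size p)%N)
  (c : I -> R) :
  pairing (lv (d:=d) p v1) (fun k : wt d => c (tag k))
  - pairing (lv (d:=d) p v0) (fun k : wt d => c (tag k)) =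
  \sum_(i : I) (nth (f0 I) p 0 i)%:R * c i.
Proof.
rewrite /pairing -sumrB sum_wt; apply: eq_bigr => i _.
rewrite (eq_bigr (fun a : 'I_(d i) =>
   ((nth 0%N (blkseq p i) a == 0%N)%:R : int)%:~R * c i)); last first.
  by move=> a _; rewrite /lv /= -mulrBl -intrB v_diff.
by rewrite -mulr_suml -rmorph_sum /= sum_ind cnt0 // natz.
Qed.

Unset Implicit Arguments.

Theorem proposition8p8 (R : realType) (I E : finType) (src tgt : E -> I)
  (hsym : symmetric_quiver src tgt) (d : {ffun I -> nat})
  (hd : exists i, d i <> 0%N) :
  exists delta : wt d -> R,
    W_invariant delta /\
    forall p : seq {ffun I -> nat}, is_partition d p ->
      (in_S src tgt delta p <-> p = [:: d]).
Proof.
pose M := (\sum_(i : I) d i)%N.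
have hM : (0 < M)%N.
  case: hd => i hi; rewrite /M (bigD1 i) //=; case: (d i) hi => //.
pose dz := fun i => (d i)%:Z.
pose c : I -> R := fun i => (kappa src tgt dz i)%:~R / 2 + (M%:R)^-1.
have hM' : (M%:R : R) != 0 by rewrite pnatr_eq0 -lt0n.
exists (fun k : wt d => c (tag k)); split; first by [].
move=> p hp; split.
  move=> hS.
  case: p hp hS => [|x [|y rest]] hp hS.
  - by case: hd => i; have := hp.2 i; rewrite big_nil => <-.
  - by congr [:: _]; apply/ffunP => i; have := hp.2 i; rewrite big_seq1.
  exfalso.
  have hp0 : (0 < size (x :: y :: rest))%N by [].
  have Q0 := hS _ (assoc_lv hp v0_dec).
  have Q1 := hS _ (assoc_lv hp v1_dec).
  have Qd := rpredB Q1 Q0.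
  pose X := (\sum_(i : I) x i)%N.
  pose xz := fun i => (x i)%:Z.
  have hpar := parity hsym dz xz.
  set z := (X in 2 * X) in hpar.
  set S := \sum_(i : I) xz i * kappa src tgt dz i in hpar.
  set Dn := (X in X + S = _) in hpar.
  have hn : n_lambda src tgt (lv (d:=d) (x::y::rest) v1)
          - n_lambda src tgt (lv (d:=d) (x::y::rest) v0) = Dn.
    rewrite /n_lambda.
    have -> : forall a b c d : int, (a - b) - (c - d) = (a - c) - (b - d) by move=> *; ring.
    rewrite nR_diff // ng_diff //= /Dn; congr (_ - _).
      by apply: eq_bigr => e _; rewrite !natz.
    by apply: eq_bigr => i _; rewrite !natz.
  have hpd := pairing_diff hp hp0 c.
  have hsum : \sum_(i : I) (nth (f0 I) (x :: y :: rest) 0 i)%:R * c i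
              = S%:~R / 2 + X%:R / M%:R.
    rewrite /S rmorph_sum /= mulr_suml /X natr_sum mulr_suml -big_split.
    apply: eq_bigr => i _; rewrite /c /xz intrM -pmulrn /=; field.
    by rewrite pnatr_eq0 -lt0n.
  have key : ((n_lambda src tgt (lv (d:=d) (x::y::rest) v1))%:~R / 2
              + pairing (lv (d:=d) (x::y::rest) v1) (fun k : wt d => c (tag k)))
           - ((n_lambda src tgt (lv (d:=d) (x::y::rest) v0))%:~R / 2
              + pairing (lv (d:=d) (x::y::rest) v0) (fun k : wt d => c (tag k)))
           = z%:~R + X%:R / M%:R.
    have -> : forall (a b : int) (e f : R), (a%:~R / 2 + e) - (b%:~R / 2 + f)
                = (a - b)%:~R / 2 + (e - f).
      by move=> a b e f; rewrite intrB; ring.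
    rewrite hn hpd hsum.
    have -> : Dn = z + z - S by rewrite -(addrK S Dn) hpar; ring.
    by rewrite intrB intrD; field.
  have hq : (X%:R / M%:R : R) \is a Num.int.
    by have := rpredB Qd (intr_int R z); rewrite key addrAC subrr add0r.
  have [i0 hi0] := hp.1 x (mem_head _ _).
  have Xpos : (0 < X)%N.
    rewrite /X (bigD1 i0) //=; move: hi0; case: (x i0) => //.
  have hy : y \in x :: y :: rest by rewrite !inE eqxx orbT.
  have [i1 hi1] := hp.1 y hy.
  have XM : (X < M)%N.
    have hdi i : d i = (x i + (y i + \sum_(w <- rest) w i))%N.
      by rewrite -(hp.2 i) !big_cons.
    rewrite /M (eq_bigr _ (fun i _ => hdi i)) big_split /= -/X (bigD1 i1) //=.
    have : (0 < y i1)%N by move: hi1; case: (y i1).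
    lia.
  have q0 : (0 : R) < X%:R / M%:R by rewrite divr_gt0 // ltr0n.
  have q1 : (X%:R / M%:R : R) < 1 by rewrite ltr_pdivrMr ?ltr0n // mul1r ltr_nat.
  have := norm_intr_ge1 hq (lt0r_neq0 q0).
  rewrite ger0_norm; last exact: ltW. by move=> h; move: q1; rewrite ltNge h.
move=> -> l hl.
have hsz : size (undup [seq l k | k <- enum (wt d)]) = 1%N.
  by have := congr1 size hl; rewrite /assoc_partition size_map size_sort.
case U : (undup [seq l k | k <- enum (wt d)]) hsz => [|v [|? ?]] // _.
have lvk k : l k = v.
  have : l k \in undup [seq l k | k <- enum (wt d)] by rewrite mem_undup map_f // mem_enum.
  by rewrite U inE => /eqP.
have n0 : n_lambda src tgt l = 0.
  rewrite /n_lambda /nR /ng.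
  rewrite big1; last by move=> e _; rewrite big1 // => a _; rewrite big1 // => b _; rewrite !lvk subrr.
  rewrite big1 //; by move=> i _; rewrite big1 // => a _; rewrite big1 // => b _; rewrite !lvk subrr.
have [z hz] : exists z : int, \sum_(i : I) dz i * kappa src tgt dz i = 2 * z.
  have := parity hsym dz dz; set z := (X in 2 * X) => hz0; exists z; rewrite -hz0.
  rewrite [\sum_(e : E) _]big1; last by move=> e _; rewrite subrr mulr0.
  rewrite [\sum_(i : I) dz i * (dz i - dz i)]big1; last by move=> i _; rewrite subrr mulr0.
  by rewrite subr0 add0r.
rewrite n0 /pairing (eq_bigr (fun k => v%:~R * c (tag k))); last by move=> k _; rewrite lvk.
rewrite -mulr_sumr sum_wt.
have -> : \sum_(i : I) \sum_(a : 'I_(d i)) c (tag (wk a)) = z%:~R + 1.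
  rewrite (eq_bigr (fun i => (d i)%:R * c i)); last first.
    by move=> i _; rewrite (eq_bigr (fun _ => c i)) // big_const_ord iter_addr_0 mulr_natl.
  rewrite /c (eq_bigr (fun i => (dz i * kappa src tgt dz i)%:~R / 2 + (d i)%:R / M%:R)); last first.
    by move=> i _; rewrite intrM mulrDr mulrA /dz.
  rewrite big_split /= -mulr_suml -mulr_suml -rmorph_sum hz -natr_sum -/M divff //.
  by rewrite rmorphM /=; field.
by rewrite mul0r add0r rpredM ?rpredD ?rpred1 ?intr_int.
Qed.
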